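(* Let $\mathcal T$ be a self-orthogonal subcategory of $\mathcal C$. Then ${}_{\mathcal T}\mathcal X$ is closed under extensions, under direct summands, and under cones of inflations; the last means: for every $\mathbb E$-triangle $A\to B\to C\dashrightarrow$ with $A,B\in{}_{\mathcal T}\mathcal X$ one has $C\in{}_{\mathcal T}\mathcal X$.
   Context: $(\mathcal C,\mathbb E,\mathfrak s)$ is an extriangulated category in the sense of Nakaoka–Palu, Krull–Schmidt, with enough projectives and enough injectives; subcategories are full, additive, closed under isomorphisms. Higher extensions: $\mathbb E^1=\mathbb E$, $\mathbb E^{i+1}(X,Y)=\mathbb E(\Omega^iX,Y)\cong\mathbb E(X,\Sigma^iY)$. $\mathcal T$ is self-orthogonal if $\mathbb E^i(T_1,T_2)=0$ for all $i\ge1$, $T_1,T_2\in\mathcal T$. $\mathcal T^{\perp}=\{Y:\mathbb E^i(T,Y)=0\ \forall i\ge1,\forall T\in\mathcal T\}$. ${}_{\mathcal T}\mathcal X$ is the subcategory of objects $A$ for which there exist $\mathbb E$-triangles $K_{i+1}\to T_i\to K_i\dashrightarrow$ for all $i\ge0$ with $K_0=A$, $T_i\in\mathcal T$ and $K_{i+1}\in\mathcal T^{\perp}$ for all $i$. Closed under extensions: for every $\mathbb E$-triangle $A\to B\to C\dashrightarrow$ with $A,C$ in the subcategory, $B$ is in it. *)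

(* Defs.v *)
From mathcomp Require Import all_boot all_algebra.
Import GRing.Theory.
Local Open Scope ring_scope.

Record PreAddCat := {
  obj :> Type;
  hom : obj -> obj -> zmodType;
  comp : forall A B C : obj, hom B C -> hom A B -> hom A C;
  idm : forall A : obj, hom A A;
  compA : forall (A B C D : obj) (f : hom C D) (g : hom B C) (h : hom A B),
      comp A C D f (comp A B C g h) = comp A B D (comp B C D f g) h;
  comp1m : forall (A B : obj) (f : hom A B), comp A B B (idm B) f = f;
  compm1 : forall (A B : obj) (f : hom A B), comp A A B f (idm A) = f;
  compDl : forall (A B C : obj) (f g : hom B C) (h : hom A B),
      comp A B C (f + g) h = comp A B C f h + comp A B C g h;
  compDr : forall (A B C : obj) (f : hom B C) (g h : hom A B),
      comp A B C f (g + h) = comp A B C f g + comp A B C f h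
}.
Arguments hom {p} _ _.
Arguments comp {p A B C} _ _.
Arguments idm {p} A.

Section Additive.
Variable C : PreAddCat.

Definition iso (X Y : C) : Prop :=
  exists (f : hom X Y) (g : hom Y X), comp g f = idm X /\ comp f g = idm Y.

Definition biprod_ax {X Y S : C} (i1 : hom X S) (i2 : hom Y S)
    (p1 : hom S X) (p2 : hom S Y) : Prop :=
  [/\ comp p1 i1 = idm X, comp p2 i2 = idm Y, comp p1 i2 = 0,
      comp p2 i1 = 0 & comp i1 p1 + comp i2 p2 = idm S].

Record biprod (X Y : C) := {
  bp_obj : C;
  bp_in1 : hom X bp_obj;
  bp_in2 : hom Y bp_obj;
  bp_pr1 : hom bp_obj X;
  bp_pr2 : hom bp_obj Y;
  bp_ax : biprod_ax bp_in1 bp_in2 bp_pr1 bp_pr2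
}.

Definition isAdditive : Prop :=
  (exists Z : C, idm Z = 0) /\
  (forall X Y : C, exists S (i1 : hom X S) (i2 : hom Y S) p1 p2,
      biprod_ax i1 i2 p1 p2).

Definition hom_unit {X : C} (f : hom X X) : Prop :=
  exists g : hom X X, comp g f = idm X /\ comp f g = idm X.
Definition local_obj (X : C) : Prop :=
  idm X <> 0 /\ forall f : hom X X, hom_unit f \/ hom_unit (idm X - f).

Definition KrullSchmidt : Prop :=
  forall X : C, exists (n : nat) (Xs : 'I_n -> C)
    (i : forall k, hom (Xs k) X) (p : forall k, hom X (Xs k)),
    [/\ forall k, comp (p k) (i k) = idm (Xs k),
        forall k l, k != l -> comp (p k) (i l) = 0,
        \sum_(k < n) comp (i k) (p k) = idm X
      & forall k, local_obj (Xs k)].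
End Additive.

Arguments iso {C} X Y.
Arguments biprod {C} X Y.
Arguments bp_obj {C X Y} b.
Arguments bp_in1 {C X Y} b.
Arguments bp_in2 {C X Y} b.
Arguments bp_pr1 {C X Y} b.
Arguments bp_pr2 {C X Y} b.

(* Ext Z A = E(Z, A);  push a = a_* ;  pull c = c^* ;
   real d x y  means  s(d) = [A -x-> B -y-> Z]  (x,y realize d). *)
Record ExtriData (C : PreAddCat) := {
  Ext : C -> C -> zmodType;
  push : forall (Z A A' : C), hom A A' -> Ext Z A -> Ext Z A';
  pull : forall (Z Z' A : C), hom Z' Z -> Ext Z A -> Ext Z' A;
  real : forall (Z A B : C), Ext Z A -> hom A B -> hom B Z -> Prop
}.
Arguments Ext {C} e _ _.
Arguments push {C} e {Z A A'} a d.
Arguments pull {C} e {Z Z' A} c d.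
Arguments real {C} e {Z A B} d x y.

Section Extri.
Variables (C : PreAddCat) (e : ExtriData C).

Definition seq_equiv {A B B' Z : C} (x : hom A B) (y : hom B Z)
    (x' : hom A B') (y' : hom B' Z) : Prop :=
  exists (b : hom B B') (b' : hom B' B),
    [/\ comp b' b = idm B, comp b b' = idm B', comp b x = x' & comp y' b = y].

Definition ET1 : Prop :=
  (forall (Z A A' : C) (a : hom A A') (d1 d2 : Ext e Z A),
        push e a (d1 - d2) = push e a d1 - push e a d2) /\
      (forall (Z Z' A : C) (c : hom Z' Z) (d1 d2 : Ext e Z A),
        pull e c (d1 - d2) = pull e c d1 - pull e c d2) /\
      (forall (Z A A' : C) (a a' : hom A A') (d : Ext e Z A),
        push e (a + a') d = push e a d + push e a' d) /\
      (forall (Z Z' A : C) (c c' : hom Z' Z) (d : Ext e Z A),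
        pull e (c + c') d = pull e c d + pull e c' d) /\
      (forall (Z A : C) (d : Ext e Z A), push e (idm A) d = d) /\
      (forall (Z A : C) (d : Ext e Z A), pull e (idm Z) d = d) /\
      (forall (Z A A' A'' : C) (a : hom A A') (a' : hom A' A'') (d : Ext e Z A),
        push e (comp a' a) d = push e a' (push e a d)) /\
      (forall (Z Z' Z'' A : C) (c : hom Z' Z) (c' : hom Z'' Z') (d : Ext e Z A),
        pull e (comp c c') d = pull e c' (pull e c d))
    /\ (forall (Z Z' A A' : C) (a : hom A A') (c : hom Z' Z) (d : Ext e Z A),
        push e a (pull e c d) = pull e c (push e a d)).

(* s is a realization (Def 2.9) whose values are equivalence classes *)
Definition is_realization : Prop :=
  [/\ (forall (Z A : C) (d : Ext e Z A), exists B (x : hom A B) (y : hom B Z),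
          real e d x y),
      (forall (Z A B B' : C) (d : Ext e Z A) (x : hom A B) (y : hom B Z)
          (x' : hom A B') (y' : hom B' Z),
          real e d x y -> (real e d x' y' <-> seq_equiv x y x' y'))
    & (forall (A Z A' Z' B B' : C) (d : Ext e Z A) (d' : Ext e Z' A')
          (a : hom A A') (c : hom Z Z') (x : hom A B) (y : hom B Z)
          (x' : hom A' B') (y' : hom B' Z'),
          push e a d = pull e c d' -> real e d x y -> real e d' x' y' ->
          exists b : hom B B', comp b x = comp x' a /\ comp y' b = comp c y)].

Definition ET2 : Prop :=
  [/\ is_realization,
      (forall (A Z : C) (S : biprod A Z),
          real e (0 : Ext e Z A) (bp_in1 S) (bp_pr2 S))
    & (forall (A A' B B' Z Z' : C) (bA : biprod A A') (bB : biprod B B')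
          (bZ : biprod Z Z') (d : Ext e Z A) (d' : Ext e Z' A')
          (x : hom A B) (y : hom B Z) (x' : hom A' B') (y' : hom B' Z'),
          real e d x y -> real e d' x' y' ->
          real e (push e (bp_in1 bA) (pull e (bp_pr1 bZ) d)
                  + push e (bp_in2 bA) (pull e (bp_pr2 bZ) d'))
            (comp (bp_in1 bB) (comp x (bp_pr1 bA))
               + comp (bp_in2 bB) (comp x' (bp_pr2 bA)))
            (comp (bp_in1 bZ) (comp y (bp_pr1 bB))
               + comp (bp_in2 bZ) (comp y' (bp_pr2 bB))))].

Definition ET3 : Prop :=
  forall (A B Z A' B' Z' : C) (d : Ext e Z A) (d' : Ext e Z' A')
    (x : hom A B) (y : hom B Z) (x' : hom A' B') (y' : hom B' Z')
    (a : hom A A') (b : hom B B'),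
    real e d x y -> real e d' x' y' -> comp b x = comp x' a ->
    exists c : hom Z Z', comp c y = comp y' b /\ push e a d = pull e c d'.

Definition ET3op : Prop :=
  forall (A B Z A' B' Z' : C) (d : Ext e Z A) (d' : Ext e Z' A')
    (x : hom A B) (y : hom B Z) (x' : hom A' B') (y' : hom B' Z')
    (b : hom B B') (c : hom Z Z'),
    real e d x y -> real e d' x' y' -> comp y' b = comp c y ->
    exists a : hom A A', comp x' a = comp b x /\ push e a d = pull e c d'.

Definition ET4 : Prop :=
  forall (A B D Cc F : C) (d : Ext e D A) (d' : Ext e F B)
    (f : hom A B) (f' : hom B D) (g : hom B Cc) (g' : hom Cc F),
    real e d f f' -> real e d' g g' ->
    exists (E : C) (h : hom A Cc) (h' : hom Cc E) (d'' : Ext e E A)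
      (dd : hom D E) (ee : hom E F),
      [/\ real e d'' h h',
          real e (push e f' d') dd ee,
          pull e dd d'' = d,
          push e f d'' = pull e ee d' &
          [/\ comp g f = h, comp dd f' = comp h' g & comp ee h' = g']].

Definition ET4op : Prop :=
  forall (D A B F Cc : C) (d : Ext e B D) (d' : Ext e Cc F)
    (f : hom D A) (f' : hom A B) (g : hom F B) (g' : hom B Cc),
    real e d f f' -> real e d' g g' ->
    exists (E : C) (h : hom E A) (h' : hom A Cc) (d'' : Ext e Cc E)
      (dd : hom D E) (ee : hom E F),
      [/\ real e d'' h h',
          real e (pull e g d) dd ee,
          d' = push e ee d'',
          push e dd d = pull e g' d'' &
          [/\ comp h dd = f, comp f' h = comp g ee & h' = comp g' f']].

Definition isExtriangulated : Prop :=
  isAdditive C /\ ET1 /\ ET2 /\ ET3 /\ ET3op /\ ET4 /\ ET4op.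

Definition Etriangle (A B Z : C) : Prop :=
  exists (x : hom A B) (y : hom B Z) (d : Ext e Z A), real e d x y.

Definition projective (P : C) : Prop :=
  forall (A B Z : C) (x : hom A B) (y : hom B Z) (d : Ext e Z A) (c : hom P Z),
    real e d x y -> exists b : hom P B, comp y b = c.
Definition injective (I : C) : Prop :=
  forall (A B Z : C) (x : hom A B) (y : hom B Z) (d : Ext e Z A) (a : hom A I),
    real e d x y -> exists b : hom B I, comp b x = a.
Definition enough_projectives : Prop :=
  forall Z : C, exists (A P : C) (x : hom A P) (y : hom P Z) (d : Ext e Z A),
    projective P /\ real e d x y.
Definition enough_injectives : Prop :=
  forall A : C, exists (I Z : C) (x : hom A I) (y : hom I Z) (d : Ext e Z A),
    injective I /\ real e d x y.

(* Higher extensions.  ExtVanish n X Y  means  E^{n+1}(X, Y) = 0, where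
   E^{n+1}(X,Y) = E(Omega^n X, Y) and Omega X is the first term of an
   E-triangle  Omega X -> P -> X --> with P projective. *)
Fixpoint ExtVanish (n : nat) (X Y : C) : Prop :=
  match n with
  | 0 => forall d : Ext e X Y, d = 0
  | n'.+1 => forall (K P : C) (x : hom K P) (y : hom P X) (d : Ext e X K),
      projective P -> real e d x y -> ExtVanish n' K Y
  end.

Definition subcategory (T : C -> Prop) : Prop :=
  [/\ (forall X Y : C, T X -> iso X Y -> T Y),
      (exists Z : C, idm Z = 0 /\ T Z)
    & (forall (X Y : C) (S : biprod X Y), T X -> T Y -> T (bp_obj S))].

Definition self_orthogonal (T : C -> Prop) : Prop :=
  forall (n : nat) (T1 T2 : C), T T1 -> T T2 -> ExtVanish n T1 T2.

Definition perp (T : C -> Prop) (Y : C) : Prop :=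
  forall (n : nat) (T1 : C), T T1 -> ExtVanish n T1 Y.

Definition TX (T : C -> Prop) (A : C) : Prop :=
  exists (K Tn : nat -> C), K 0%N = A /\
    forall i : nat, [/\ T (Tn i), perp T (K i.+1) &
      exists (x : hom (K i.+1) (Tn i)) (y : hom (Tn i) (K i))
             (d : Ext e (K i) (K i.+1)), real e d x y].

Definition closed_under_extensions (S : C -> Prop) : Prop :=
  forall (A B Z : C) (x : hom A B) (y : hom B Z) (d : Ext e Z A),
    real e d x y -> S A -> S Z -> S B.

Definition closed_under_cones_of_inflations (S : C -> Prop) : Prop :=
  forall (A B Z : C) (x : hom A B) (y : hom B Z) (d : Ext e Z A),
    real e d x y -> S A -> S B -> S Z.
End Extri.

Definition closed_under_summands (C : PreAddCat) (S : C -> Prop) : Prop :=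
  forall (X Y : C) (b : biprod X Y), S (bp_obj b) -> S X.
Arguments closed_under_summands {C} S.

Arguments isExtriangulated {C} e.
Arguments enough_projectives {C} e.
Arguments enough_injectives {C} e.
Arguments projective {C} e P.
Arguments injective {C} e I.
Arguments ExtVanish {C} e n X Y.
Arguments self_orthogonal {C} e T.
Arguments perp {C} e T Y.
Arguments TX {C} e T A.
Arguments subcategory {C} T.
Arguments closed_under_extensions {C} e S.
Arguments closed_under_cones_of_inflations {C} e S.

(* Main.v *)
From Pilot Require Import Defs.
From mathcomp Require Import all_boot all_algebra.
Import Pilot.Defs.
Import GRing.Theory.
Local Open Scope ring_scope.
Set Implicit Arguments.
Unset Strict Implicit.

Lemma cA {C : PreAddCat} {A B D E : C} (f : hom D E) (g : hom B D) (h : hom A B) :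
  comp f (comp g h) = comp (comp f g) h.
Proof. exact: compA. Qed.
Lemma c1m {C : PreAddCat} {A B : C} (f : hom A B) : comp (idm B) f = f.
Proof. exact: comp1m. Qed.
Lemma cm1 {C : PreAddCat} {A B : C} (f : hom A B) : comp f (idm A) = f.
Proof. exact: compm1. Qed.
Lemma cDl {C : PreAddCat} {A B D : C} (f g : hom B D) (h : hom A B) :
  comp (f + g) h = comp f h + comp g h.
Proof. exact: compDl. Qed.
Lemma cDr {C : PreAddCat} {A B D : C} (f : hom B D) (g h : hom A B) :
  comp f (g + h) = comp f g + comp f h.
Proof. exact: compDr. Qed.

Lemma comp0l (C : PreAddCat) (A B D : C) (f : hom A B) : comp (0 : hom B D) f = 0.
Proof. have H := cDl (0 : hom B D) 0 f. rewrite addr0 in H.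
have : comp (0 : hom B D) f + comp 0 f = comp 0 f + 0 by rewrite addr0 -H.
by move/addrI. Qed.
Lemma comp0r (C : PreAddCat) (A B D : C) (f : hom B D) : comp f (0 : hom A B) = 0.
Proof. have H := cDr f (0 : hom A B) 0. rewrite addr0 in H.
have : comp f (0 : hom A B) + comp f 0 = comp f 0 + 0 by rewrite addr0 -H.
by move/addrI. Qed.
Lemma compNl (C : PreAddCat) (A B D : C) (f : hom B D) (g : hom A B) : comp (-f) g = - comp f g.
Proof. apply/eqP; rewrite -addr_eq0 addrC -cDl subrr comp0l //. Qed.
Lemma compNr (C : PreAddCat) (A B D : C) (f : hom B D) (g : hom A B) : comp f (-g) = - comp f g.
Proof. apply/eqP; rewrite -addr_eq0 addrC -cDr subrr comp0r //. Qed.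
Lemma compBl (C : PreAddCat) (A B D : C) (f f' : hom B D) (g : hom A B) : comp (f - f') g = comp f g - comp f' g.
Proof. by rewrite cDl compNl. Qed.
Lemma compBr (C : PreAddCat) (A B D : C) (f : hom B D) (g g' : hom A B) : comp f (g - g') = comp f g - comp f g'.
Proof. by rewrite cDr compNr. Qed.
Lemma zero_hom_from (C : PreAddCat) (Z0 X : C) (hz : idm Z0 = 0) (f : hom Z0 X) : f = 0.
Proof. by rewrite -(cm1 f) hz comp0r. Qed.
Lemma zero_hom_to (C : PreAddCat) (Z0 X : C) (hz : idm Z0 = 0) (f : hom X Z0) : f = 0.
Proof. by rewrite -(c1m f) hz comp0l. Qed.


Section ET1L.
End ET1L.

Lemma push_sub {C : PreAddCat} {e : ExtriData C} (h : ET1 C e) (Z A A' : C) (a : hom A A') (d1 d2 : Ext e Z A) :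
  push e a (d1 - d2) = push e a d1 - push e a d2.
Proof. by case: h. Qed.
Lemma pull_sub {C : PreAddCat} {e : ExtriData C} (h : ET1 C e) (Z Z' A : C) (c : hom Z' Z) (d1 d2 : Ext e Z A) :
  pull e c (d1 - d2) = pull e c d1 - pull e c d2.
Proof. by case: h => _ []. Qed.
Lemma pushD {C : PreAddCat} {e : ExtriData C} (h : ET1 C e) (Z A A' : C) (a a' : hom A A') (d : Ext e Z A) :
  push e (a + a') d = push e a d + push e a' d.
Proof. by case: h => _ [] _ []. Qed.
Lemma pullD {C : PreAddCat} {e : ExtriData C} (h : ET1 C e) (Z Z' A : C) (c c' : hom Z' Z) (d : Ext e Z A) :
  pull e (c + c') d = pull e c d + pull e c' d.
Proof. by case: h => _ [] _ [] _ []. Qed.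
Lemma push1 {C : PreAddCat} {e : ExtriData C} (h : ET1 C e) (Z A : C) (d : Ext e Z A) : push e (idm A) d = d.
Proof. by case: h => _ [] _ [] _ [] _ []. Qed.
Lemma pull1 {C : PreAddCat} {e : ExtriData C} (h : ET1 C e) (Z A : C) (d : Ext e Z A) : pull e (idm Z) d = d.
Proof. by case: h => _ [] _ [] _ [] _ [] _ []. Qed.
Lemma pushM {C : PreAddCat} {e : ExtriData C} (h : ET1 C e) (Z A A' A'' : C) (a : hom A A') (a' : hom A' A'') (d : Ext e Z A) :
  push e (comp a' a) d = push e a' (push e a d).
Proof. by case: h => _ [] _ [] _ [] _ [] _ [] _ []. Qed.
Lemma pullM {C : PreAddCat} {e : ExtriData C} (h : ET1 C e) (Z Z' Z'' A : C) (c : hom Z' Z) (c' : hom Z'' Z') (d : Ext e Z A) :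
  pull e (comp c c') d = pull e c' (pull e c d).
Proof. by case: h => _ [] _ [] _ [] _ [] _ [] _ [] _ []. Qed.
Lemma push_pull {C : PreAddCat} {e : ExtriData C} (h : ET1 C e) (Z Z' A A' : C) (a : hom A A') (c : hom Z' Z) (d : Ext e Z A) :
  push e a (pull e c d) = pull e c (push e a d).
Proof. by case: h => _ [] _ [] _ [] _ [] _ [] _ [] _ []. Qed.

Lemma push_d0 {C : PreAddCat} {e : ExtriData C} (h : ET1 C e) (Z A A' : C) (a : hom A A') :
  push e a (0 : Ext e Z A) = 0.
Proof. by rewrite -(subrr (0 : Ext e Z A)) push_sub // subrr. Qed.
Lemma pull_d0 {C : PreAddCat} {e : ExtriData C} (h : ET1 C e) (Z Z' A : C) (c : hom Z' Z) :
  pull e c (0 : Ext e Z A) = 0.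
Proof. by rewrite -(subrr (0 : Ext e Z A)) pull_sub // subrr. Qed.
Lemma push_0d {C : PreAddCat} {e : ExtriData C} (h : ET1 C e) (Z A A' : C) (d : Ext e Z A) :
  push e (0 : hom A A') d = 0.
Proof. have H := pushD h (0 : hom A A') 0 d. rewrite addr0 in H.
have : push e (0 : hom A A') d + push e 0 d = push e 0 d + 0 by rewrite addr0 -H.
by move/addrI. Qed.
Lemma pull_0d {C : PreAddCat} {e : ExtriData C} (h : ET1 C e) (Z Z' A : C) (d : Ext e Z A) :
  pull e (0 : hom Z' Z) d = 0.
Proof. have H := pullD h (0 : hom Z' Z) 0 d. rewrite addr0 in H.
have : pull e (0 : hom Z' Z) d + pull e 0 d = pull e 0 d + 0 by rewrite addr0 -H.
by move/addrI. Qed.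

Lemma real_ex {C : PreAddCat} {e : ExtriData C} (h : ET2 C e) (Z A : C) (d : Ext e Z A) :
  exists B (x : hom A B) (y : hom B Z), real e d x y.
Proof. by case: h => [[H _ _]] _ _; apply: H. Qed.
Lemma real_equiv {C : PreAddCat} {e : ExtriData C} (h : ET2 C e) (Z A B B' : C) (d : Ext e Z A)
  (x : hom A B) (y : hom B Z) (x' : hom A B') (y' : hom B' Z) :
  real e d x y -> (real e d x' y' <-> seq_equiv C x y x' y').
Proof. by case: h => [[_ H _]] _ _; apply: H. Qed.
Lemma real_morph {C : PreAddCat} {e : ExtriData C} (h : ET2 C e) (A Z A' Z' B B' : C) (d : Ext e Z A) (d' : Ext e Z' A')
          (a : hom A A') (c : hom Z Z') (x : hom A B) (y : hom B Z)
          (x' : hom A' B') (y' : hom B' Z') :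
          push e a d = pull e c d' -> real e d x y -> real e d' x' y' ->
          exists b : hom B B', comp b x = comp x' a /\ comp y' b = comp c y.
Proof. by case: h => [[_ _ H]] _ _; apply: H. Qed.
Lemma real_split {C : PreAddCat} {e : ExtriData C} (h : ET2 C e) (A Z : C) (S : biprod A Z) :
  real e (0 : Ext e Z A) (bp_in1 S) (bp_pr2 S).
Proof. by case: h => _ H _; apply: H. Qed.
Lemma real_sum {C : PreAddCat} {e : ExtriData C} (h : ET2 C e) (A A' B B' Z Z' : C) (bA : biprod A A') (bB : biprod B B')
          (bZ : biprod Z Z') (d : Ext e Z A) (d' : Ext e Z' A')
          (x : hom A B) (y : hom B Z) (x' : hom A' B') (y' : hom B' Z') :
          real e d x y -> real e d' x' y' ->
          real e (push e (bp_in1 bA) (pull e (bp_pr1 bZ) d)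
                  + push e (bp_in2 bA) (pull e (bp_pr2 bZ) d'))
            (comp (bp_in1 bB) (comp x (bp_pr1 bA))
               + comp (bp_in2 bB) (comp x' (bp_pr2 bA)))
            (comp (bp_in1 bZ) (comp y (bp_pr1 bB))
               + comp (bp_in2 bZ) (comp y' (bp_pr2 bB))).
Proof. by case: h => _ _ H; apply: H. Qed.

Lemma biprod_ex {C : PreAddCat} (h : isAdditive C) (X Y : C) : exists S : biprod X Y, True.
Proof. case: h => _ /(_ X Y) [S [i1 [i2 [p1 [p2 H]]]]]. by exists (@Build_biprod C _ _ _ _ _ _ _ H). Qed.

Lemma bp_ax' {C : PreAddCat} {X Y : C} (S : biprod X Y) :
  [/\ comp (bp_pr1 S) (bp_in1 S) = idm X, comp (bp_pr2 S) (bp_in2 S) = idm Y,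
      comp (bp_pr1 S) (bp_in2 S) = 0,
      comp (bp_pr2 S) (bp_in1 S) = 0 & comp (bp_in1 S) (bp_pr1 S) + comp (bp_in2 S) (bp_pr2 S) = idm (bp_obj S)].
Proof. exact: bp_ax. Qed.

Lemma H4 {C : PreAddCat} {e : ExtriData C} (h1 : ET1 C e) (h2 : ET2 C e) (hadd : isAdditive C)
  (A B Z X : C) (d : Ext e Z A) (x : hom A B) (y : hom B Z) (f : hom X Z) :
  real e d x y -> pull e f d = 0 -> exists g : hom X B, comp y g = f.
Proof.
move=> hr hf. have [S _] := biprod_ex hadd A X.
have := real_morph h2 (a := idm A) (c := f) _ (real_split h2 S) hr.
rewrite push1 // hf => /(_ erefl) [b [_ hb]].
exists (comp b (bp_in2 S)). by rewrite cA hb -cA; case: (bp_ax' S) => _ -> _ _ _; rewrite cm1.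
Qed.

Lemma H2 {C : PreAddCat} {e : ExtriData C} (h1 : ET1 C e) (h2 : ET2 C e) (hadd : isAdditive C)
  (A B Z X : C) (d : Ext e Z A) (x : hom A B) (y : hom B Z) (h : hom A X) :
  real e d x y -> push e h d = 0 -> exists g : hom B X, comp g x = h.
Proof.
move=> hr hf. have [S _] := biprod_ex hadd X Z.
have := real_morph h2 (a := h) (c := idm Z) _ hr (real_split h2 S).
rewrite pull1 // hf => /(_ erefl) [b [hb _]].
exists (comp (bp_pr1 S) b). by rewrite -cA hb cA; case: (bp_ax' S) => -> _ _ _ _; rewrite c1m.
Qed.

Lemma ET3op_ {C : PreAddCat} {e : ExtriData C} (h : ET3op C e) (A B Z A' B' Z' : C) (d : Ext e Z A) (d' : Ext e Z' A')
    (x : hom A B) (y : hom B Z) (x' : hom A' B') (y' : hom B' Z')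
    (b : hom B B') (c : hom Z Z') :
    real e d x y -> real e d' x' y' -> comp y' b = comp c y ->
    exists a : hom A A', comp x' a = comp b x /\ push e a d = pull e c d'.
Proof. exact: h. Qed.
Lemma ET3_ {C : PreAddCat} {e : ExtriData C} (h : ET3 C e) (A B Z A' B' Z' : C) (d : Ext e Z A) (d' : Ext e Z' A')
    (x : hom A B) (y : hom B Z) (x' : hom A' B') (y' : hom B' Z')
    (a : hom A A') (b : hom B B') :
    real e d x y -> real e d' x' y' -> comp b x = comp x' a ->
    exists c : hom Z Z', comp c y = comp y' b /\ push e a d = pull e c d'.
Proof. exact: h. Qed.

Lemma H3 {C : PreAddCat} {e : ExtriData C} (h2 : ET2 C e) (h3 : ET3op C e) (hadd : isAdditive C)
  (A B Z X : C) (d : Ext e Z A) (x : hom A B) (y : hom B Z) (k : hom X B) :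
  real e d x y -> comp y k = 0 -> exists a : hom X A, comp x a = k.
Proof.
move=> hr hk. have [S _] := biprod_ex hadd X Z.
have [|a [ha _]] := ET3op_ h3 (b := comp k (bp_pr1 S)) (c := 0) (real_split h2 S) hr.
  by rewrite cA hk !comp0l.
exists a. rewrite ha -cA; case: (bp_ax' S) => -> _ _ _ _; rewrite cm1 //.
Qed.

Lemma H1 {C : PreAddCat} {e : ExtriData C} (h1 : ET1 C e) (h2 : ET2 C e) (h3 : ET3 C e) (hadd : isAdditive C)
  (A B Z : C) (d : Ext e Z A) (x : hom A B) (y : hom B Z) :
  real e d x y -> push e x d = 0.
Proof.
move=> hr. have [S _] := biprod_ex hadd B Z.
have [c [_ hc]] := ET3_ h3 (a := x) (b := bp_in1 S) hr (real_split h2 S) erefl.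
by rewrite hc pull_d0.
Qed.

Lemma E0 {C : PreAddCat} {e : ExtriData C} (h1 : ET1 C e) (h2 : ET2 C e) (h3 : ET3op C e)
  (K P W A : C) (dl : Ext e W K) (i : hom K P) (p : hom P W) (d : Ext e W A) :
  projective e P -> real e dl i p -> exists f : hom K A, push e f dl = d.
Proof.
move=> hP hr. have [M [x [y hd]]] := real_ex h2 d.
have [b hb] := hP _ _ _ _ _ _ p hd.
have [|a [_ ha]] := ET3op_ h3 (b := b) (c := idm W) hr hd; first by rewrite hb c1m.
by exists a; rewrite ha pull1.
Qed.

Lemma EX {C : PreAddCat} {e : ExtriData C} (h1 : ET1 C e) (h2 : ET2 C e) (h3 : ET3op C e) (hadd : isAdditive C)
  (K T Z A : C) (dl : Ext e Z K) (i : hom K T) (q : hom T Z) (ep : Ext e Z A) :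
  real e dl i q -> pull e q ep = 0 -> exists u : hom K A, push e u dl = ep.
Proof.
move=> hr h0. have [M [x [y hd]]] := real_ex h2 ep.
have [g hg] := H4 h1 h2 hadd hd h0.
have [|a [_ ha]] := ET3op_ h3 (b := g) (c := idm Z) hr hd; first by rewrite hg c1m.
by exists a; rewrite ha pull1.
Qed.

Definition vanish {C : PreAddCat} (e : ExtriData C) (W Y : C) : Prop := forall d : Ext e W Y, d = 0.

Fixpoint syz {C : PreAddCat} (e : ExtriData C) (n : nat) (X W : C) : Prop :=
  match n with
  | 0 => W = X
  | n'.+1 => exists (K P : C) (x : hom K P) (y : hom P X) (d : Ext e X K),
      [/\ projective e P, real e d x y & syz e n' K W]
  end.

Lemma ExtVanish_syz {C : PreAddCat} (e : ExtriData C) (n : nat) (X Y : C) :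
  ExtVanish e n X Y <-> forall W, syz e n X W -> vanish e W Y.
Proof.
elim: n X => [|n IH] X /=.
  by split => [H W -> | H]; [exact: H | exact: H].
split.
  move=> H W [K [P [x [y [d [hp hr hs]]]]]]. exact: (proj1 (IH K) (H K P x y d hp hr)).
move=> H K P x y d hp hr. apply/IH => W hs. apply: H. by exists K, P, x, y, d.
Qed.

Lemma syz_snoc {C : PreAddCat} (e : ExtriData C) (n : nat) (X W K P : C) (x : hom K P) (y : hom P W)
  (d : Ext e W K) : syz e n X W -> projective e P -> real e d x y -> syz e n.+1 X K.
Proof.
elim: n X => [|n IH] X /=.
  move=> hWX hp hr; subst X. by exists K, P, x, y, d.
move=> [K' [P' [x' [y' [d' [hp' hr' hs]]]]]] hp hr.
exists K', P', x', y', d'; split => //. exact: IH hs hp hr.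
Qed.

Definition SyzT {C : PreAddCat} (e : ExtriData C) (T : C -> Prop) (W : C) : Prop :=
  exists n T1, T T1 /\ syz e n T1 W.

Lemma perp_iff {C : PreAddCat} (e : ExtriData C) (T : C -> Prop) (Y : C) :
  perp e T Y <-> forall W, SyzT e T W -> vanish e W Y.
Proof.
split.
  move=> H W [n [T1 [hT hs]]]. exact: (proj1 (ExtVanish_syz e n T1 Y) (H n T1 hT)).
move=> H n T1 hT. apply/ExtVanish_syz => W hs. apply: H. by exists n, T1.
Qed.

Lemma so_van {C : PreAddCat} (e : ExtriData C) (T : C -> Prop) (hso : self_orthogonal e T) (W T2 : C) :
  SyzT e T W -> T T2 -> vanish e W T2.
Proof.
move=> [n [T1 [hT hs]]] hT2. exact: (proj1 (ExtVanish_syz e n T1 T2) (hso n T1 T2 hT hT2)).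
Qed.

Lemma SyzT_snoc {C : PreAddCat} (e : ExtriData C) (T : C -> Prop) (W K P : C) (x : hom K P) (y : hom P W)
  (d : Ext e W K) : SyzT e T W -> projective e P -> real e d x y -> SyzT e T K.
Proof. move=> [n [T1 [hT hs]]] hp hr. exists n.+1, T1; split => //. exact: syz_snoc hs hp hr. Qed.

Lemma SyzT_T {C : PreAddCat} (e : ExtriData C) (T : C -> Prop) (X : C) : T X -> SyzT e T X.
Proof. by move=> h; exists 0%N, X. Qed.

Lemma perp_ext {C : PreAddCat} {e : ExtriData C} (h1 : ET1 C e) (h2 : ET2 C e) (h3 : ET3 C e) (h3o : ET3op C e)
  (hadd : isAdditive C) (hP : enough_projectives e) (T : C -> Prop)
  (A B Z : C) (d : Ext e Z A) (x : hom A B) (y : hom B Z) :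
  real e d x y -> perp e T A -> perp e T Z -> perp e T B.
Proof.
move=> hr /perp_iff hA /perp_iff hZ. apply/perp_iff => W hW d0.
have [OW [P [i [p [dl [hp hrd]]]]]] := hP W.
have [f hf] := E0 h1 h2 h3o d0 hp hrd.
have hy : push e (comp y f) dl = 0 by rewrite pushM // hf; apply: hZ.
have [g hg] := H2 h1 h2 hadd hrd hy.
have [g' hg'] := hp _ _ _ _ _ _ g hr.
have [|k hk] := H3 h2 h3o hadd (k := f - comp g' i) hr.
  by rewrite compBr cA hg' hg subrr.
rewrite -hf.
have -> : f = comp g' i + comp x k by rewrite hk addrC subrK.
rewrite pushD // !pushM // (H1 h1 h2 h3 hadd hrd) push_d0 //.
by rewrite (hA W hW (push e k dl)) push_d0 // addr0.
Qed.

Lemma perp_of_tri {C : PreAddCat} {e : ExtriData C} (h1 : ET1 C e) (h2 : ET2 C e) (h3o : ET3op C e)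
  (hadd : isAdditive C) (hP : enough_projectives e) (T : C -> Prop) (hso : self_orthogonal e T)
  (K1 T0 A : C) (d : Ext e A K1) (x : hom K1 T0) (q : hom T0 A) :
  real e d x q -> T T0 -> perp e T K1 -> perp e T A.
Proof.
move=> hr hT /perp_iff hK. apply/perp_iff => W hW d0.
have [OW [P [i [p [dl [hp hrd]]]]]] := hP W.
have [f hf] := E0 h1 h2 h3o d0 hp hrd.
have hOW := SyzT_snoc hW hp hrd.
have [g hg] := H4 h1 h2 hadd hr (hK OW hOW (pull e f d)).
by rewrite -hf -hg pushM // (so_van hso hW hT (push e g dl)) push_d0.
Qed.

Lemma perp_iso {C : PreAddCat} {e : ExtriData C} (h1 : ET1 C e) (T : C -> Prop) (X Y : C) :
  iso X Y -> perp e T X -> perp e T Y.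
Proof.
move=> [f [g [hgf hfg]]] /perp_iff hX. apply/perp_iff => W hW d0.
by rewrite -(push1 h1 d0) -hfg pushM // (hX W hW (push e g d0)) push_d0.
Qed.

Lemma perp_summand {C : PreAddCat} {e : ExtriData C} (h1 : ET1 C e) (T : C -> Prop) (X Y : C) (b : biprod X Y) :
  perp e T (bp_obj b) -> perp e T Y.
Proof.
move=> /perp_iff hX. apply/perp_iff => W hW d0.
case: (bp_ax' b) => _ h22 _ _ _.
by rewrite -(push1 h1 d0) -h22 pushM // (hX W hW (push e (bp_in2 b) d0)) push_d0.
Qed.

From Stdlib Require Import IndefiniteDescription.

Definition Fstep {C : PreAddCat} (e : ExtriData C) (T S : C -> Prop) (X : C) : Prop :=
  exists K T0, [/\ T T0, perp e T K, S K & Etriangle C e K T0 X].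

Lemma TX_unfold {C : PreAddCat} (e : ExtriData C) (T : C -> Prop) (X : C) :
  TX e T X -> Fstep e T (TX e T) X.
Proof.
move=> [Ks [Tn [h0 H]]]. subst X. exists (Ks 1%N), (Tn 0%N).
have [hT hp htri] := H 0%N. split => //.
by exists (fun i => Ks i.+1), (fun i => Tn i.+1); split => // i; apply: H.
Qed.

Lemma TX_coind {C : PreAddCat} (e : ExtriData C) (T S : C -> Prop) :
  (forall X, S X -> Fstep e T S X) -> forall X, S X -> TX e T X.
Proof.
move=> H X hX.
have step : forall p : {X : C | S X}, {KT : C * C | [/\ T KT.2, perp e T KT.1, S KT.1 & Etriangle C e KT.1 KT.2 (sval p)]}.
  move=> p. apply: constructive_indefinite_description.
  have [K [T0 H']] := H _ (proj2_sig p). by exists (K, T0).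
pose nxt (p : {X : C | S X}) : {X : C | S X} :=
  exist _ (sval (step p)).1 (match proj2_sig (step p) with And4 _ _ hS _ => hS end).
pose st := fix st n := match n with 0%N => exist _ X hX | n.+1 => nxt (st n) end.
exists (fun n => sval (st n)), (fun n => (sval (step (st n))).2). split => // i.
by case: (proj2_sig (step (st i))).
Qed.

Lemma TX_fold {C : PreAddCat} (e : ExtriData C) (T : C -> Prop) (X : C) :
  Fstep e T (TX e T) X -> TX e T X.
Proof.
apply: TX_coind => Y [K [T0 [hT hp hK htri]]]. exists K, T0; split => //.
exact: TX_unfold.
Qed.

Lemma TX_perp {C : PreAddCat} {e : ExtriData C} (h1 : ET1 C e) (h2 : ET2 C e) (h3o : ET3op C e)
  (hadd : isAdditive C) (hP : enough_projectives e) (T : C -> Prop) (hso : self_orthogonal e T)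
  (X : C) : TX e T X -> perp e T X.
Proof.
move=> /TX_unfold [K [T0 [hT hp _ [x [y [d hr]]]]]]. exact: perp_of_tri hr hT hp.
Qed.

Lemma zero_ex {C : PreAddCat} (h : isAdditive C) : exists Z0 : C, idm Z0 = 0.
Proof. by case: h. Qed.

Lemma bpL_ax {C : PreAddCat} (K Z0 : C) (hz : idm Z0 = 0) :
  biprod_ax C (idm K) (0 : hom Z0 K) (idm K) 0.
Proof. split; rewrite ?c1m ?comp0l ?comp0r ?addr0 //. Qed.
Definition bpL {C : PreAddCat} (K Z0 : C) (hz : idm Z0 = 0) : biprod K Z0 :=
  @Build_biprod C K Z0 K _ _ _ _ (bpL_ax K hz).

Lemma bpR_ax {C : PreAddCat} (Z0 X : C) (hz : idm Z0 = 0) :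
  biprod_ax C (0 : hom Z0 X) (idm X) 0 (idm X).
Proof. split; rewrite ?c1m ?comp0l ?comp0r ?add0r //. Qed.
Definition bpR {C : PreAddCat} (Z0 X : C) (hz : idm Z0 = 0) : biprod Z0 X :=
  @Build_biprod C Z0 X X _ _ _ _ (bpR_ax X hz).

Lemma bpI_ax {C : PreAddCat} (Z0 X Y : C) (hz : idm Z0 = 0) (f : hom X Y) (g : hom Y X)
  (hgf : comp g f = idm X) (hfg : comp f g = idm Y) :
  biprod_ax C (0 : hom Z0 X) g 0 f.
Proof. split; rewrite ?c1m ?comp0l ?comp0r ?add0r //. Qed.
Definition bpI {C : PreAddCat} (Z0 X Y : C) (hz : idm Z0 = 0) (f : hom X Y) (g : hom Y X)
  (hgf : comp g f = idm X) (hfg : comp f g = idm Y) : biprod Z0 Y :=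
  @Build_biprod C Z0 Y X _ _ _ _ (bpI_ax hz hgf hfg).

Lemma bpS_ax {C : PreAddCat} (X Y : C) (b : biprod X Y) :
  biprod_ax C (bp_in2 b) (bp_in1 b) (bp_pr2 b) (bp_pr1 b).
Proof. case: (bp_ax' b) => ? ? ? ? ?; split => //; by rewrite addrC. Qed.
Definition bpS {C : PreAddCat} (X Y : C) (b : biprod X Y) : biprod Y X :=
  @Build_biprod C Y X (bp_obj b) _ _ _ _ (bpS_ax b).

Lemma ET4op_ {C : PreAddCat} {e : ExtriData C} (h : ET4op C e) (D A B F Cc : C) (d : Ext e B D) (d' : Ext e Cc F)
    (f : hom D A) (f' : hom A B) (g : hom F B) (g' : hom B Cc) :
    real e d f f' -> real e d' g g' ->
    exists (E : C) (h : hom E A) (h' : hom A Cc) (d'' : Ext e Cc E)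
      (dd : hom D E) (ee : hom E F),
      [/\ real e d'' h h',
          real e (pull e g d) dd ee,
          d' = push e ee d'',
          push e dd d = pull e g' d'' &
          [/\ comp h dd = f, comp f' h = comp g ee & h' = comp g' f']].
Proof. exact: h. Qed.
Lemma ET4_ {C : PreAddCat} {e : ExtriData C} (h : ET4 C e) (A B D Cc F : C) (d : Ext e D A) (d' : Ext e F B)
    (f : hom A B) (f' : hom B D) (g : hom B Cc) (g' : hom Cc F) :
    real e d f f' -> real e d' g g' ->
    exists (E : C) (h : hom A Cc) (h' : hom Cc E) (d'' : Ext e E A)
      (dd : hom D E) (ee : hom E F),
      [/\ real e d'' h h',
          real e (push e f' d') dd ee,
          pull e dd d'' = d,
          push e f d'' = pull e ee d' &
          [/\ comp g f = h, comp dd f' = comp h' g & comp ee h' = g']].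
Proof. exact: h. Qed.

Lemma split_zero_iso {C : PreAddCat} {e : ExtriData C} (h2 : ET2 C e)
  (K E Z0 : C) (hz : idm Z0 = 0) (dd : hom K E) (ee : hom E Z0) :
  real e (0 : Ext e Z0 K) dd ee -> iso K E.
Proof.
move=> hr. have /(real_equiv h2 dd ee) [H _] := real_split h2 (bpL K hz).
have [b [b' [? ? _ _]]] := H hr.
by exists b, b'.
Qed.

Lemma defl_iso {C : PreAddCat} {e : ExtriData C} (h1 : ET1 C e) (h2 : ET2 C e) (h4o : ET4op C e)
  (hadd : isAdditive C) (K T0 X Y : C) (dl : Ext e X K) (x : hom K T0) (q : hom T0 X)
  (f : hom X Y) (g : hom Y X) (hgf : comp g f = idm X) (hfg : comp f g = idm Y) :
  real e dl x q -> exists E (x' : hom E T0) (d' : Ext e Y E), real e d' x' (comp f q) /\ iso K E.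
Proof.
move=> hr. have [Z0 hz] := zero_ex hadd.
have hs := real_split h2 (bpI hz hgf hfg).
have [E [h [h' [d'' [dd [ee [hr1 hr2 _ _ [_ _ hh]]]]]]]] := ET4op_ h4o hr hs; subst h'.
exists E, h, d''; split => //.
rewrite /= pull_0d // in hr2. exact: (@split_zero_iso _ _ h2 K E Z0 hz dd ee hr2).
Qed.

Lemma TX_iso {C : PreAddCat} {e : ExtriData C} (h1 : ET1 C e) (h2 : ET2 C e) (h4o : ET4op C e)
  (hadd : isAdditive C) (T : C -> Prop) (X Y : C) : iso X Y -> TX e T X -> TX e T Y.
Proof.
move=> hi hX. apply: (TX_coind (S := fun Y => exists X, TX e T X /\ iso X Y)); last by exists X.
move=> {hi hX X Y} Y [X [/TX_unfold [K [T0 [hT hp hK [x [q [dl hr]]]]]] [f [g [hgf hfg]]]]].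
have [E [x' [d' [hr' hKE]]]] := defl_iso h1 h2 h4o hadd hgf hfg hr.
exists E, T0; split => //.
- refine (perp_iso h1 hKE hp).
- by exists K.
- by exists x', (comp f q), d'.
Qed.

Lemma adj_biprod {C : PreAddCat} (K A E : C) (dd : hom A E) (ee : hom E K) (r : hom E A) (s : hom K E)
  (u : hom K A) :
  comp r dd = idm A -> comp ee s = idm K -> comp ee dd = 0 -> comp r s = 0 ->
  comp s ee + comp dd r = idm E ->
  biprod_ax C (s - comp dd u) dd ee (r + comp u ee).
Proof.
move=> h1 h2 h3 h4 h5; split.
- by rewrite compBr h2 cA h3 comp0l subr0.
- by rewrite cDl h1 -cA h3 comp0r addr0.
- exact: h3.
- rewrite cDl !compBr h4 -!cA h2 (cA ee dd u) h3 comp0l comp0r cA h1 c1m cm1.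
  by rewrite sub0r subr0 addNr.
- rewrite compBl cDr -!cA -!addrA; rewrite [comp dd r + _]addrC !addrA.
  by rewrite subrK -h5 addrC.
Qed.

Lemma split_data {C : PreAddCat} (A K E : C) (S2 : biprod A K) (b : hom (bp_obj S2) E) (b' : hom E (bp_obj S2))
  (dd : hom A E) (ee : hom E K) :
  comp b' b = idm _ -> comp b b' = idm E -> comp b (bp_in1 S2) = dd -> comp ee b = bp_pr2 S2 ->
  let r := comp (bp_pr1 S2) b' in let s := comp b (bp_in2 S2) in
  [/\ comp r dd = idm A, comp ee s = idm K, comp ee dd = 0, comp r s = 0 &
      comp s ee + comp dd r = idm E].
Proof.
move=> hb'b hbb' hdd hee r s.
case: (bp_ax' S2) => p11 p22 p12 p21 hsum.
have hee' : ee = comp (bp_pr2 S2) b' by rewrite -hee -cA hbb' cm1.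
rewrite /r /s -hdd; split.
- by rewrite -cA (cA b') hb'b c1m p11.
- by rewrite cA hee p22.
- by rewrite cA hee p21.
- by rewrite -cA (cA b') hb'b c1m p12.
- rewrite hee' -!cA -cDr (cA (bp_in2 S2)) (cA (bp_in1 S2)) -cDl addrC hsum c1m //.
Qed.

Lemma TX_ext {C : PreAddCat} {e : ExtriData C} (h1 : ET1 C e) (h2 : ET2 C e) (h3 : ET3 C e) (h3o : ET3op C e)
  (h4 : ET4 C e) (h4o : ET4op C e)
  (hadd : isAdditive C) (hP : enough_projectives e) (T : C -> Prop) (hT : subcategory T)
  (hso : self_orthogonal e T)
  (A B Z : C) (d : Ext e Z A) (x : hom A B) (y : hom B Z) :
  real e d x y -> TX e T A -> TX e T Z -> TX e T B.
Proof.
move=> hr hA hZ.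
apply: (TX_coind (S := fun B => exists A Z (x : hom A B) (y : hom B Z) (d : Ext e Z A),
   [/\ real e d x y, TX e T A & TX e T Z])); last by exists A, Z, x, y, d.
move=> {hr hA hZ A B Z x y d} B [A [Z [x [y [d [hr hA hZ]]]]]].
have hpA' := TX_perp h1 h2 h3o hadd hP hso hA.
have [K1A [T0A [hTA hpA hKA [iA [qA [dA hrA]]]]]] := TX_unfold hA.
have [K1Z [T0Z [hTZ hpZ hKZ [iZ [qZ [dZ hrZ]]]]]] := TX_unfold hZ.
have [Z0 hz] := zero_ex hadd.
have hvan : pull e qZ d = 0 by apply: (proj1 (perp_iff e T A) hpA' _ (SyzT_T e hTZ)).
have [M _] := biprod_ex hadd A T0Z.
have hsM := real_split h2 M.
have [E [h [h' [d'' [dd [ee [hr1 hr2 hdZ hpd [hhdd hpr hh']]]]]]]] := ET4op_ h4o hsM hrZ.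
rewrite pull_d0 // in hr2. rewrite push_d0 // in hpd.
have [S2 _] := biprod_ex hadd A K1Z.
have /(real_equiv h2 dd ee) [Hq _] := real_split h2 S2.
have [b [b' [hb'b hbb' hbdd hbee]]] := Hq hr2.
have [hrdd hees heedd hrs hsum] := split_data hb'b hbb' hbdd hbee.
set r := comp (bp_pr1 S2) b' in hrdd hrs hsum.
set s := comp b (bp_in2 S2) in hees hrs hsum.
have hth : pull e qZ (d - push e r d'') = 0.
  by rewrite pull_sub // -push_pull // -hpd push_d0 // hvan subrr.
have [u hu] := EX h1 h2 h3o hadd hrZ hth.
pose N := @Build_biprod C K1Z A E _ _ _ _ (adj_biprod u hrdd hees heedd hrs hsum).
have hsN := real_split h2 N.
have hd : push e (bp_pr2 N) d'' = d.
  by rewrite /= pushD // pushM // -hdZ hu addrC subrK.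
have [E' [h3x [h3' [d3 [dd3 [ee3 [hr3 hr4 _ _ _]]]]]]] := ET4_ h4 hsN hr1.
rewrite hd in hr4.
have /(real_equiv h2 dd3 ee3) [Hq2 _] := hr.
have [ph' [ph [hph1 hph2 _ _]]] := Hq2 hr4.
have [E3 [x3 [d3' [hr3' hiso3]]]] := defl_iso h1 h2 h4o hadd hph2 hph1 hr3.
have hsz := real_split h2 (bpR T0Z hz).
have [bB _] := biprod_ex hadd T0A T0Z.
have hrsum := real_sum h2 (bpL K1A hz) bB M hrA hsz.
have [Ef [hf [hf' [df [ddf [eef [hrf hrg _ _ _]]]]]]] := ET4op_ h4o hrsum hr3'.
exists Ef, (bp_obj bB); split.
- by case: hT => _ _ /(_ _ _ bB hTA hTZ).
- apply: (perp_ext h1 h2 h3 h3o hadd hP hrg hpA). exact: (perp_iso h1 hiso3 hpZ).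
- exists K1A, E3, ddf, eef, (pull e x3 (push e (bp_in1 (bpL K1A hz)) (pull e (bp_pr1 M) dA) +
                   push e (bp_in2 (bpL K1A hz)) (pull e (bp_pr2 M) 0))); split => //.
  exact: (TX_iso h1 h2 h4o hadd hiso3 hKZ).
- by exists hf, hf', df.
Qed.

Lemma TX_cone {C : PreAddCat} {e : ExtriData C} (h1 : ET1 C e) (h2 : ET2 C e) (h3 : ET3 C e) (h3o : ET3op C e)
  (h4 : ET4 C e) (h4o : ET4op C e)
  (hadd : isAdditive C) (hP : enough_projectives e) (T : C -> Prop) (hT : subcategory T)
  (hso : self_orthogonal e T)
  (A B Z : C) (d : Ext e Z A) (x : hom A B) (y : hom B Z) :
  real e d x y -> TX e T A -> TX e T B -> TX e T Z.
Proof.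
move=> hr hA hB.
have [K1 [T0 [hT0 hp hK [i [q [dB hrB]]]]]] := TX_unfold hB.
have [E [h [h' [d'' [dd [ee [hr1 hr2 _ _ _]]]]]]] := ET4op_ h4o hrB hr.
apply: TX_fold. exists E, T0; split => //.
- exact: (perp_ext h1 h2 h3 h3o hadd hP hr2 hp (TX_perp h1 h2 h3o hadd hP hso hA)).
- exact: (TX_ext h1 h2 h3 h3o h4 h4o hadd hP hT hso hr2 hK hA).
- by exists h, h', d''.
Qed.

Lemma TX_summand {C : PreAddCat} {e : ExtriData C} (h1 : ET1 C e) (h2 : ET2 C e) (h3 : ET3 C e) (h3o : ET3op C e)
  (h4 : ET4 C e) (h4o : ET4op C e)
  (hadd : isAdditive C) (hP : enough_projectives e) (T : C -> Prop) (hT : subcategory T)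
  (hso : self_orthogonal e T)
  (X Y : C) (b : biprod X Y) : TX e T (bp_obj b) -> TX e T X.
Proof.
move=> hb.
apply: (TX_coind (S := fun X => exists Y (b : biprod X Y), TX e T (bp_obj b))); last by exists Y, b.
move=> {hb X Y b} X [Y [b hb]].
have [K1 [T0 [hT0 hp hK [i [q [dl hr]]]]]] := TX_unfold hb.
have [E [h [h' [d'' [dd [ee [hr1 hr2 _ _ _]]]]]]] := ET4op_ h4o hr (real_split h2 (bpS b)).
have [E' [k [k' [d3 [dd' [ee' [hr3 hr4 _ _ _]]]]]]] := ET4op_ h4o hr (real_split h2 b).
have [bK _] := biprod_ex hadd K1 K1.
have hbK := TX_ext h1 h2 h3 h3o h4 h4o hadd hP hT hso (real_split h2 bK) hK hK.
have [bE _] := biprod_ex hadd E E'.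
have hrs := real_sum h2 bK bE (bpS b) hr2 hr4.
have hbE := TX_ext h1 h2 h3 h3o h4 h4o hadd hP hT hso hrs hbK hb.
exists E, T0; split => //.
- apply: (perp_ext h1 h2 h3 h3o hadd hP hr2 hp).
  exact: (perp_summand h1 (TX_perp h1 h2 h3o hadd hP hso hb)).
- by exists E', bE.
- by exists h, h', d''.
Qed.

Theorem lemma3p6 (C : PreAddCat) (e : ExtriData C)
  (hE : isExtriangulated e) (hKS : KrullSchmidt C)
  (hP : enough_projectives e) (hI : enough_injectives e)
  (T : C -> Prop) (hT : subcategory T) (hso : self_orthogonal e T) :
  [/\ closed_under_extensions e (TX e T),
      closed_under_summands (TX e T)
    & closed_under_cones_of_inflations e (TX e T)].
Proof.
case: hE => [hadd [h1 [h2 [h3 [h3o [h4 h4o]]]]]]; split.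
- move=> A B Z x y d hr hA hZ. exact: (TX_ext h1 h2 h3 h3o h4 h4o hadd hP hT hso hr hA hZ).
- move=> X Y b hb. exact: (TX_summand h1 h2 h3 h3o h4 h4o hadd hP hT hso hb).
- move=> A B Z x y d hr hA hB. exact: (TX_cone h1 h2 h3 h3o h4 h4o hadd hP hT hso hr hA hB).
Qed.
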